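(* Let $(S,\Delta,\mathbb{P})$ be a probability space, $(U,d)$ a separable metric space, $\mathfrak{X}$ the set of $U$-valued random variables on $S$, and suppose $\mathfrak{X}^0$ has at least two distinct elements. Let $\mathcal{I}$ be an admissible ideal on $\mathbb{N}$. Then $\mathcal{I}$ is maximal if and only if $\mathcal{I}^{\mathbb{P}}\text{-}LIM^r\underline{X}=\Gamma^{r^s}_{\underline{X}}(\mathcal{I}^{\mathbb{P}})$ for every $r\geq 0$ and every sequence $\underline{X}=\{X_n\}$ in $\mathfrak{X}$.
   Context: $\mathfrak{X}^0$ is the set of equivalence classes of $\mathfrak{X}$ under almost sure equality. An ideal on $\mathbb{N}$ is a family $\mathcal{I}\subseteq\mathcal{P}(\mathbb{N})$ with $\varnothing\in\mathcal{I}$, closed under finite unions and under subsets; it is admissible if $\mathbb{N}\notin\mathcal{I}$ and $\{t\}\in\mathcal{I}$ for every $t\in\mathbb{N}$; it is maximal if $\mathbb{N}\notin\mathcal{I}$ and there is no ideal $\mathcal{J}$ with $\mathcal{I}\subsetneq\mathcal{J}$ and $\mathbb{N}\notin\mathcal{J}$. $\mathcal{I}^{\mathbb{P}}\text{-}LIM^r\underline{X}$ is the set of $X_*\in\mathfrak{X}$ with $\{n:\mathbb{P}(d(X_n,X_* )>r+\varepsilon)>\delta\}\in\mathcal{I}$ for all $\varepsilon,\delta>0$; $\Gamma^{r^s}_{\underline{X}}(\mathcal{I}^{\mathbb{P}})$ is the set of $Y\in\mathfrak{X}$ with $\{n:\mathbb{P}(d(X_n,Y)<r+\varepsilon)>1-\delta\}\notin\mathcal{I}$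 for all $\varepsilon,\delta>0$. *)

(* Defs.v *)
From HB Require Import structures.
From mathcomp Require Import all_boot all_order all_algebra.
From mathcomp Require Import all_classical all_reals all_analysis.
Set Implicit Arguments. Unset Strict Implicit. Unset Printing Implicit Defensive.
Import Order.TTheory GRing.Theory Num.Theory.
Local Open Scope classical_set_scope.
Local Open Scope ring_scope.

Definition is_metric (R : realType) (U : Type) (d : U -> U -> R) : Prop :=
  [/\ (forall x y, 0 <= d x y),
      (forall x y, d x y = 0 <-> x = y),
      (forall x y, d x y = d y x) &
      (forall x y z, d x z <= d x y + d y z)].

Definition metric_open (R : realType) (U : Type) (d : U -> U -> R) (O : set U) : Prop :=
  forall x, O x -> exists2 e : R, 0 < e & forall y, d x y < e -> O y.

Definition metric_separable (R : realType) (U : Type) (d : U -> U -> R) : Prop :=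
  exists D : set U, countable D /\
    forall x (e : R), 0 < e -> exists2 y, D y & d x y < e.

Definition is_rv (dT : measure_display) (T : measurableType dT) (R : realType)
  (U : Type) (d : U -> U -> R) (X : T -> U) : Prop :=
  forall O : set U, metric_open d O -> measurable (X @^-1` O).

Definition is_ideal (I : set (set nat)) : Prop :=
  [/\ I set0,
      (forall A B, I A -> I B -> I (A `|` B)) &
      (forall A B, B `<=` A -> I A -> I B)].

Definition admissible_ideal (I : set (set nat)) : Prop :=
  [/\ is_ideal I, ~ I setT & forall t : nat, I [set t]].

Definition maximal_ideal (I : set (set nat)) : Prop :=
  [/\ is_ideal I, ~ I setT &
      ~ exists J : set (set nat), [/\ is_ideal J, I `<` J & ~ J setT]].

Definition I_P_LIM (dT : measure_display) (T : measurableType dT) (R : realType)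
  (P : probability T R) (U : Type) (d : U -> U -> R) (I : set (set nat))
  (r : R) (X : nat -> T -> U) : set (T -> U) :=
  [set Xs : T -> U | is_rv d Xs /\
    forall eps delta : R, 0 < eps -> 0 < delta ->
      I [set n : nat | (delta%:E < P [set w : T | (r + eps < d (X n w) (Xs w))%R])%E]].

Definition I_P_Gamma (dT : measure_display) (T : measurableType dT) (R : realType)
  (P : probability T R) (U : Type) (d : U -> U -> R) (I : set (set nat))
  (r : R) (X : nat -> T -> U) : set (T -> U) :=
  [set Y : T -> U | is_rv d Y /\
    forall eps delta : R, 0 < eps -> 0 < delta ->
      ~ I [set n : nat | ((1 - delta)%R%:E < P [set w : T | (d (X n w) (Y w) < r + eps)%R])%E]].

(* Main.v *)
Require Import Defs.
From HB Require Import structures.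
From mathcomp Require Import all_boot all_order all_algebra.
From mathcomp Require Import all_classical all_reals all_analysis.
From mathcomp Require Import lra.
Import Order.TTheory GRing.Theory Num.Theory.
Local Open Scope classical_set_scope.
Local Open Scope ring_scope.

Lemma cbigcup_meas (dT : measure_display) (S : measurableType dT) (U : Type)
  (D : set U) (F : U -> set S) : countable D ->
  (forall q, D q -> measurable (F q)) -> measurable (\bigcup_(q in D) F q).
Proof.
move=> cD mF.
have [->|/set0P[r Dr]] := eqVneq D set0; first by rewrite bigcup_set0.
move/countable_injP: cD => [f injf].
rewrite [X in measurable X](_ : _ = \bigcup_(n in f @` D) F ('pinv_(cst r) D f n)).
  apply: bigcup_measurable => _ [s Ds <-].
  by rewrite pinvKV ?inE //; apply: mF.
apply/seteqP; split=> [w [q Dq Fw]|w [_ [s Ds <-]]].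
  by exists (f q); [exists q|rewrite pinvKV ?inE].
by rewrite pinvKV ?inE // => Fw; exists s.
Qed.

Lemma mball_open (R : realType) (U : Type) (d : U -> U -> R) (q : U) (a : R) :
  is_metric d -> metric_open d [set y | d q y < a].
Proof.
move=> [d0 dE dS dT] x /= hx; exists (a - d q x); first by rewrite subr_gt0.
move=> y hy; have := dT q x y; lra.
Qed.

Lemma meas_lt (dT : measure_display) (S : measurableType dT) (R : realType)
  (U : Type) (d : U -> U -> R) (X Y : S -> U) (c : R) :
  is_metric d -> metric_separable d -> is_rv d X -> is_rv d Y ->
  measurable [set w | d (X w) (Y w) < c].
Proof.
move=> hd [D [cD dD]] mX mY.
have hd' := hd; case: hd' => [d0 dE dS dT'].
rewrite [X in measurable X](_ : _ = \bigcup_(q in D) \bigcup_k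
   (X @^-1` [set y | d q y < k.+1%:R^-1] `&` Y @^-1` [set y | d q y < c - k.+1%:R^-1])).
  apply: cbigcup_meas => // q _; apply: bigcupT_measurable => k.
  by apply: measurableI; [apply: mX|apply: mY]; apply: mball_open.
apply/seteqP; split=> [w /= hw|w [q _ [k _ [/= h1 h2]]]].
  have [k hk] := @ltr_add_invr R ((d (X w) (Y w) + c) / 2) c ltac:(lra).
  have kp : 0 < k.+1%:R^-1 :> R by rewrite invr_gt0 ltr0n.
  have [q Dq hq] := dD (X w) _ kp.
  exists q => //; exists k => //; split => /=; first by rewrite dS.
  have := dT' q (X w) (Y w); rewrite (dS q (X w)); move: (k.+1%:R^-1) hk hq => e; lra.
have := dT' (X w) q (Y w); rewrite (dS (X w) q); move: (k.+1%:R^-1) h1 h2 => e /=; lra.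
Qed.

Lemma meas_gt (dT : measure_display) (S : measurableType dT) (R : realType)
  (U : Type) (d : U -> U -> R) (X Y : S -> U) (c : R) :
  is_metric d -> metric_separable d -> is_rv d X -> is_rv d Y ->
  measurable [set w | c < d (X w) (Y w)].
Proof.
move=> hd hs mX mY.
rewrite [X in measurable X](_ : _ = ~` \bigcap_k [set w | d (X w) (Y w) < c + k.+1%:R^-1]).
  apply: measurableC; apply: bigcapT_measurable => k; exact: meas_lt.
apply/seteqP; split=> [w /= hw|w /= hw].
  have [k hk] := ltr_add_invr hw.
  move=> /(_ k I) /=; move: (k.+1%:R^-1) hk => e; lra.
rewrite ltNge; apply/negP => hle; apply: hw => k _ /=.
have kp : 0 < k.+1%:R^-1 :> R by rewrite invr_gt0 ltr0n.
move: (k.+1%:R^-1) kp => e; lra.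
Qed.

Lemma pr_fin (dT : measure_display) (S : measurableType dT) (R : realType)
  (P : probability S R) (A : set S) : measurable A ->
  exists p : R, P A = p%:E /\ 0 <= p <= 1.
Proof.
move=> mA; have h0 := measure_ge0 P A; have h1 := probability_le1 P mA.
have fA : P A \is a fin_num by apply: fin_num_measure.
exists (fine (P A)); rewrite fineK //; split => //.
by apply/andP; split; rewrite -lee_fin fineK.
Qed.

Lemma prime_of_max (I : set (set nat)) : maximal_ideal I ->
  forall A, I A \/ I (~` A).
Proof.
move=> [[i0 iU iS] nT nJ] A.
have [hA|nA] := pselect (I A); first by left.
have [hC|nC] := pselect (I (~` A)); first by right.
exfalso; apply: nJ.
exists [set B | I (B `&` A)]; split.
- split => /=; first by rewrite set0I.
  + by move=> B1 B2 h1 h2; rewrite setIUl; apply: iU.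
  + by move=> B1 B2 sB h; apply: iS h; apply: setSI.
- split; first by move=> B IB /=; apply: iS IB; apply: subIsetl.
  by move=> /(_ (~` A)) /=; rewrite setICl => /(_ i0).
- by rewrite /= setTI.
Qed.

Lemma fwd (dT : measure_display) (S : measurableType dT) (R : realType)
  (P : probability S R) (U : Type) (d : U -> U -> R)
  (hd : is_metric d) (hsep : metric_separable d)
  (I : set (set nat)) : maximal_ideal I ->
  (forall (r : R) (X : nat -> S -> U), 0 <= r -> (forall n, is_rv d (X n)) ->
     I_P_LIM P d I r X = I_P_Gamma P d I r X).
Proof.
move=> hmax r X r0 mX.
have hpr := @prime_of_max I hmax.
case: hmax => [[i0 iU iS] nT _].
apply/seteqP; split => Z [mZ hZ]; split => // eps delta ep dp.
- move=> hA; apply: nT.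
  have := hZ (eps / 2) (delta / 2) ltac:(lra) ltac:(lra) => hL.
  apply: iS (iU _ _ hA hL) => n _.
  have [hn|hn] := pselect ((1 - delta)%R%:E < P [set w | (d (X n w) (Z w) < r + eps)%R])%E.
    by left.
  right => /=.
  have m1 : measurable [set w | d (X n w) (Z w) < r + eps] by apply: meas_lt.
  have m2 : measurable [set w | r + eps / 2 < d (X n w) (Z w)] by apply: meas_gt.
  have := measureU2 P m1 m2.
  rewrite [_ `|` _](_ : _ = setT); last first.
    apply/seteqP; split => // w _ /=.
    by case: (ltP (d (X n w) (Z w)) (r + eps)) => h; [left|right; lra].
  move=> h; have e1 := @probability_setT _ _ _ P.
  have {}h : (1 <= P [set w | (d (X n w) (Z w) < r + eps)%R] +
   P [set w | (r + eps / 2 < d (X n w) (Z w))%R])%E.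
    by apply: le_trans h; rewrite -e1.
  have [p1 [hp1' hp1]] := @pr_fin _ _ _ P _ m1; have [p2 [hp2' hp2]] := @pr_fin _ _ _ P _ m2.
  rewrite hp1' hp2' in h hn *.
  move: hn h; rewrite !lte_fin -EFinD lee_fin => hn h; lra.
- have [//|hC] := hpr [set n | (delta%:E < P [set w | (r + eps < d (X n w) (Z w))%R])%E].
  exfalso; apply: (hZ eps delta ep dp); apply: iS hC => n /= h1 h2.
  have m1 : measurable [set w | d (X n w) (Z w) < r + eps] by apply: meas_lt.
  have m2 : measurable [set w | r + eps < d (X n w) (Z w)] by apply: meas_gt.
  have := measureU P m1 m2.
  have dj : [set w | d (X n w) (Z w) < r + eps] `&` [set w | r + eps < d (X n w) (Z w)] = set0.
    by apply/seteqP; split => // w [/= a b]; lra.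
  move=> /(_ dj) hU.
  have := probability_le1 P (measurableU _ _ m1 m2); rewrite hU.
  have [p1 [hP1 hp1]] := @pr_fin _ _ _ P _ m1; have [p2 [hP2 hp2]] := @pr_fin _ _ _ P _ m2.
  rewrite hP1 hP2 in h1 h2.
  move=> h3; have h4 : (p1%:E + p2%:E <= 1)%E by rewrite -hP1 -hP2; exact: h3.
  move: h1 h2 h4; rewrite !lte_fin -EFinD lee_fin => a b c; lra.
Qed.

Lemma bwd (dT : measure_display) (S : measurableType dT) (R : realType)
  (P : probability S R) (U : Type) (d : U -> U -> R)
  (hd : is_metric d) (hsep : metric_separable d)
  (htwo : exists X Y : S -> U, [/\ is_rv d X, is_rv d Y &
            ~ {ae P, forall w, X w = Y w}])
  (I : set (set nat)) (hI : admissible_ideal I) :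
  (forall (r : R) (X : nat -> S -> U), 0 <= r -> (forall n, is_rv d (X n)) ->
     I_P_LIM P d I r X = I_P_Gamma P d I r X) -> maximal_ideal I.
Proof.
move=> H; case: hI => [hid nT _]; split => //.
have hd' := hd; case: hd' => [d0 dE dS dT'].
case: hid => [i0 iU iS].
move=> [J [[j0 jU jS] [IJ nJI] nJT]].
have [B [JB nIB]] : exists B, J B /\ ~ I B.
  have [//|nex] := pselect (exists B, J B /\ ~ I B).
  exfalso; apply: nJI => B JB; have [//|nB] := pselect (I B).
  by exfalso; apply: nex; exists B.
have nIC : ~ I (~` B).
  by move=> /IJ hC; apply: nJT; rewrite -(setUv B); apply: jU.
case: htwo => [X0 [Y0 [mX0 mY0 nae]]].
have mA : forall k : nat, measurable [set w | k.+1%:R^-1 < d (Y0 w) (X0 w)].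
  by move=> k; apply: meas_gt.
have [k hk] : exists k : nat, P [set w | k.+1%:R^-1 < d (Y0 w) (X0 w)] != 0%E.
  have [//|nex] := pselect (exists k : nat, P [set w | k.+1%:R^-1 < d (Y0 w) (X0 w)] != 0%E).
  exfalso; apply: nae.
  have nb := @negligible_bigcup _ _ _ P (fun k => [set w | k.+1%:R^-1 < d (Y0 w) (X0 w)]).
  have [|N [mN PN sN]] := nb.
    move=> k; exists [set w | k.+1%:R^-1 < d (Y0 w) (X0 w)]; split => //.
    have [//|hk] := pselect (P [set w | k.+1%:R^-1 < d (Y0 w) (X0 w)] = 0%E).
    by exfalso; apply: nex; exists k; apply/eqP.
  exists N; split => // w /= hw; apply: sN.
  have hpos : 0 < d (Y0 w) (X0 w).
    rewrite lt_neqAle d0 andbT eq_sym; apply/eqP => /dE h; apply: hw; by rewrite h.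
  have [j hj] := ltr_add_invr hpos.
  by exists j => //=; rewrite add0r in hj.
have [p [hP hp]] := @pr_fin _ _ _ P _ (mA k).
have p0 : 0 < p.
  rewrite lt_neqAle; case/andP: hp => -> _; rewrite andbT eq_sym.
  by apply/eqP => h; move: hk; rewrite hP h eqxx.
pose Xn := fun n => if pselect (B n) is left _ then X0 else Y0.
have mXn : forall n, is_rv d (Xn n) by move=> n; rewrite /Xn; case: pselect.
have E := H 0 Xn (lexx 0) mXn.
have G : I_P_Gamma P d I 0 Xn X0.
  split=> // eps delta ep dp hS; apply: nIB; apply: iS hS => n Bn /=.
  rewrite /Xn; case: pselect => // _.
  rewrite (_ : [set w | d (X0 w) (X0 w) < 0 + eps] = setT).
    rewrite probability_setT lte_fin; lra.
  apply/seteqP; split=> // w _ /=; rewrite ((dE _ _).2 erefl) add0r //.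
rewrite -E in G; case: G => _ /(_ k.+1%:R^-1 (p/2)) hL.
have kp : 0 < k.+1%:R^-1 :> R by rewrite invr_gt0 ltr0n.
have {}hL := hL kp ltac:(lra).
apply: nIC; apply: iS hL => n nBn /=; rewrite /Xn; case: pselect => // _.
rewrite add0r hP lte_fin; lra.
Qed.

Theorem theorem3p15 (dT : measure_display) (S : measurableType dT) (R : realType)
  (P : probability S R) (U : Type) (d : U -> U -> R)
  (hd : is_metric d) (hsep : metric_separable d)
  (htwo : exists X Y : S -> U, [/\ is_rv d X, is_rv d Y &
            ~ {ae P, forall w, X w = Y w}])
  (I : set (set nat)) (hI : admissible_ideal I) :
  maximal_ideal I <->
  (forall (r : R) (X : nat -> S -> U), 0 <= r -> (forall n, is_rv d (X n)) ->
     I_P_LIM P d I r X = I_P_Gamma P d I r X).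
Proof.
split; first exact: (@fwd dT S R P U d hd hsep I).
exact: (@bwd dT S R P U d hd hsep htwo I hI).
Qed.
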